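(* Let $n\ge1$, let $q_1,q_2$ be powers of a prime $p$, $q=q_1\otimes q_2$, and $R=A(n,q_1,q_2)$. Let $J$ be the set of elements of $R$ of the form $\begin{pmatrix} 0 & v\\ 0 & 0\end{pmatrix}$, $v\in M_{n\times1}(\mathbb{F}_q)$ (this is the Jacobson radical of $R$). Then $J\cap Z(R)=\{0\}$, where $Z(R)$ is the center of $R$, and $|\mathscr{S}(R)|=|J|$.
   Context: For powers $q_1=p^{d_1}$, $q_2=p^{d_2}$ of a prime $p$, $q_1\otimes q_2:=p^{\operatorname{lcm}(d_1,d_2)}$; $\mathbb{F}_{q_1},\mathbb{F}_{q_2}$ are regarded as subfields of $\mathbb{F}_q$. $A(n,q_1,q_2)$ is the subring of $M_{n+1}(\mathbb{F}_q)$ of all block matrices $\begin{pmatrix} A & v\\ 0 & b\end{pmatrix}$ with $A\in M_n(\mathbb{F}_{q_1})$, $v\in M_{n\times 1}(\mathbb{F}_q)$, $b\in\mathbb{F}_{q_2}$. $\mathscr{S}(R)$ denotes the set of all semisimple complements to $J$ in $R$, i.e. $\mathbb{F}_p$-subalgebras $T$ of $R$ with $R=T\oplus J$ (and $T\cong R/J$). *)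

(* Defs.v *)
From HB Require Import structures.
From mathcomp Require Import all_boot all_order all_algebra all_field.
Set Implicit Arguments. Unset Strict Implicit. Unset Printing Implicit Defensive.
Import GRing.Theory.
Local Open Scope ring_scope.

Definition subfieldOf (F : finFieldType) (Q : nat) : {pred F} :=
  [pred x : F | x ^+ Q == x].

Section Defs.
Variables (F : finFieldType) (n : nat).

Definition wid (i : 'I_n) : 'I_n.+1 := widen_ord (leqnSn n) i.

(* A(n,q1,q2) inside M_{n+1}(F): upper-left n x n block over K1, bottom row
   zero except the corner, corner in K2, last column (rows < n) arbitrary. *)
Definition Aring (K1 K2 : {pred F}) : {set 'M[F]_n.+1} :=
  [set M : 'M[F]_n.+1 |
     [&& [forall i : 'I_n, forall j : 'I_n, M (wid i) (wid j) \in K1],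
         [forall j : 'I_n, M ord_max (wid j) == 0] &
         M ord_max ord_max \in K2]].

Definition Jrad : {set 'M[F]_n.+1} :=
  [set M : 'M[F]_n.+1 | [forall i, forall j,
     (M i j != 0) ==> ((i != ord_max) && (j == ord_max))]].

Definition center_of (R : {set 'M[F]_n.+1}) : {set 'M[F]_n.+1} :=
  [set x in R | [forall y in R, x * y == y * x]].

(* T is an F_p-subalgebra (= unital subring) of R with R = T (+) J. *)
Definition is_ss_complement (R J T : {set 'M[F]_n.+1}) : bool :=
  [&& T \subset R, (1 : 'M[F]_n.+1) \in T,
      [forall x in T, forall y in T, (x - y \in T) && (x * y \in T)],
      T :&: J == [set 0] &
      [forall r in R, exists t in T, r - t \in J]].

Definition ss_complements (R J : {set 'M[F]_n.+1}) : {set {set 'M[F]_n.+1}} :=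
  [set T | is_ss_complement R J T].

End Defs.
Arguments Aring : clear implicits.
Arguments Jrad : clear implicits.

(* Main.v *)
Require Import Defs.
From HB Require Import structures.
From mathcomp Require Import all_boot all_order all_algebra all_field.
From mathcomp Require Import ring.
Set Implicit Arguments. Unset Strict Implicit. Unset Printing Implicit Defensive.
Import GRing.Theory.
Local Open Scope ring_scope.

Definition Kok (F : finFieldType) (K : {pred F}) :=
  [/\ 0 \in K, 1 \in K, {in K &, forall x y, x - y \in K} &
      {in K &, forall x y, x * y \in K}].

Lemma subfield_ok (F : finFieldType) p d :
  p \in [pchar F] -> (0 < d)%N -> Kok (subfieldOf (F:=F) (p ^ d)).
Proof.
move=> pc d0.
have pn : [pchar F].-nat (p ^ d)%N.
  by rewrite (eq_pnat _ (pcharf_eq pc)) pnatX pnat_id ?(pcharf_prime pc).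
have Q0 : (0 < (p ^ d)%N)%N by rewrite expn_gt0 prime_gt0 ?(pcharf_prime pc).
split.
- by rewrite inE expr0n eqn0Ngt Q0.
- by rewrite inE expr1n.
- move=> x y; rewrite !inE => /eqP hx /eqP hy.
  by rewrite exprDn_pchar // exprNn_pchar // hx hy.
- move=> x y; rewrite !inE => /eqP hx /eqP hy.
  by rewrite exprMn hx hy.
Qed.

Lemma Kok_add (F : finFieldType) (K : {pred F}) : Kok K ->
  {in K &, forall x y, x + y \in K}.
Proof.
case=> K0 K1 Ks Km x y hx hy.
by rewrite -[y]opprK -(sub0r y) Ks // Ks.
Qed.


Definition jpart (F : finFieldType) n (M : 'M[F]_n.+1) : 'M[F]_n.+1 :=
  \matrix_(i, j) if (i != ord_max) && (j == ord_max) then M i j else 0.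
Definition blk (F : finFieldType) n (D : 'M[F]_n.+1) :=
  forall i j, (i == ord_max) != (j == ord_max) -> D i j = 0.
Definition fmx (F : finFieldType) n : 'M[F]_n.+1 := delta_mx ord_max ord_max.

Lemma JP (F : finFieldType) n (M : 'M[F]_n.+1) :
  reflect (forall i j, ~~((i != ord_max) && (j == ord_max)) -> M i j = 0)
          (M \in Jrad F n).
Proof.
rewrite inE; apply: (iffP forallP) => [h i j hij | h i].
  by move: (forallP (h i) j); rewrite (negbTE hij) implybF negbK => /eqP.
apply/forallP => j; apply/implyP; apply: contraNT => hij; apply/eqP; exact: h.
Qed.

Lemma sum_at (F : finFieldType) n (G : 'I_n.+1 -> F) :
  (forall k, k != ord_max -> G k = 0) -> \sum_k G k = G ord_max.
Proof. by move=> h; rewrite (bigD1 ord_max) //= big1 ?addr0. Qed.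

Lemma jpartJ (F : finFieldType) n (M : 'M[F]_n.+1) : M \in Jrad F n -> jpart M = M.
Proof.
move/JP=> h; apply/matrixP => i j; rewrite mxE.
by case: ifP => // /negbT /h ->.
Qed.

Lemma jpart_in (F : finFieldType) n (M : 'M[F]_n.+1) : jpart M \in Jrad F n.
Proof. by apply/JP => i j h; rewrite mxE (negbTE h). Qed.

Lemma jpartB (F : finFieldType) n (M N : 'M[F]_n.+1) : jpart (M - N) = jpart M - jpart N.
Proof. by apply/matrixP => i j; rewrite !mxE; case: ifP; rewrite ?subr0. Qed.

Lemma jpartD (F : finFieldType) n (M N : 'M[F]_n.+1) : jpart (M + N) = jpart M + jpart N.
Proof. by apply/matrixP => i j; rewrite !mxE; case: ifP; rewrite ?addr0. Qed.

Lemma jpart_blk (F : finFieldType) n (D : 'M[F]_n.+1) : blk D -> jpart D = 0.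
Proof.
move=> h; apply/matrixP => i j; rewrite !mxE; case: ifP => // /andP[a b].
by apply: h; rewrite (negbTE a) b.
Qed.

Lemma J0 (F : finFieldType) n : (0 : 'M[F]_n.+1) \in Jrad F n.
Proof. by apply/JP => i j _; rewrite mxE. Qed.

Lemma JB (F : finFieldType) n (U V : 'M[F]_n.+1) :
  U \in Jrad F n -> V \in Jrad F n -> U - V \in Jrad F n.
Proof. by move=> /JP hu /JP hv; apply/JP => i j h; rewrite !mxE hu ?hv ?subr0. Qed.

Lemma JD (F : finFieldType) n (U V : 'M[F]_n.+1) :
  U \in Jrad F n -> V \in Jrad F n -> U + V \in Jrad F n.
Proof. by move=> /JP hu /JP hv; apply/JP => i j h; rewrite !mxE hu ?hv ?addr0. Qed.

Lemma JZ (F : finFieldType) n a (U : 'M[F]_n.+1) :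
  U \in Jrad F n -> a *: U \in Jrad F n.
Proof. by move=> /JP hu; apply/JP => i j h; rewrite !mxE hu ?mulr0. Qed.

Lemma JJ (F : finFieldType) n (U V : 'M[F]_n.+1) :
  U \in Jrad F n -> V \in Jrad F n -> U *m V = 0.
Proof.
move=> /JP hu /JP hv; apply/matrixP => i j; rewrite !mxE big1 // => k _.
case: (k =P ord_max) => [-> | /eqP k0]; first by rewrite (hv ord_max) ?mulr0 ?eqxx.
by rewrite hu ?mul0r // (negbTE k0) andbF.
Qed.

Lemma JD_r (F : finFieldType) n (U D : 'M[F]_n.+1) :
  U \in Jrad F n -> blk D -> U *m D = D ord_max ord_max *: U.
Proof.
move=> /JP hu hd; apply/matrixP => i j; rewrite !mxE.
rewrite (sum_at (G := fun k => U i k * D k j)) => [|k k0]; last by rewrite hu ?mul0r // (negbTE k0) andbF.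
case: (j =P ord_max) => [-> | /eqP j0]; first by rewrite mulrC.
by rewrite hd ?eqxx ?(negbTE j0) // mulr0 (hu i j) ?mulr0 // (negbTE j0) andbF.
Qed.

Lemma DJ (F : finFieldType) n (U D : 'M[F]_n.+1) :
  U \in Jrad F n -> blk D -> D *m U \in Jrad F n.
Proof.
move=> /JP hu hd; apply/JP => i j h; rewrite !mxE big1 // => k _.
case: (j =P ord_max) h => [-> | /eqP j0 _]; last by rewrite hu ?mulr0 // (negbTE j0) andbF.
rewrite andbT negbK => /eqP ->.
case: (k =P ord_max) => [-> | /eqP k0]; first by rewrite hu ?mulr0 ?eqxx.
by rewrite hd ?mul0r // eqxx k0.
Qed.

Lemma blkM (F : finFieldType) n (D1 D2 : 'M[F]_n.+1) :
  blk D1 -> blk D2 -> blk (D1 *m D2).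
Proof.
move=> h1 h2 i j hij; rewrite !mxE big1 // => k _.
case: (boolP ((k == ord_max) == (i == ord_max))) => hk.
  by rewrite h2 ?mulr0 // (eqP hk).
by rewrite h1 ?mul0r // eq_sym.
Qed.

Lemma blkB (F : finFieldType) n (D1 D2 : 'M[F]_n.+1) :
  blk D1 -> blk D2 -> blk (D1 - D2).
Proof. by move=> h1 h2 i j h; rewrite !mxE h1 ?h2 ?subr0. Qed.

Lemma blk1 (F : finFieldType) n : blk (1 : 'M[F]_n.+1).
Proof.
move=> i j; rewrite !mxE; case: (eqVneq i j) => [e|ne] //.
by subst; rewrite eqxx.
Qed.

Lemma blkf (F : finFieldType) n : blk (fmx F n).
Proof.
move=> i j; rewrite !mxE; case: (eqVneq i ord_max) => [e|ni];
  case: (eqVneq j ord_max) => [e'|nj] //.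
Qed.

Lemma fJ (F : finFieldType) n (U : 'M[F]_n.+1) :
  U \in Jrad F n -> fmx F n *m U = 0.
Proof.
move=> /JP hu; apply/matrixP => i j; rewrite !mxE big1 // => k _.
rewrite !mxE; case: (k =P ord_max) => [-> | _]; last by rewrite andbF mul0r.
by rewrite hu ?mulr0 ?eqxx.
Qed.

Lemma f_mm (F : finFieldType) n : fmx F n ord_max ord_max = 1.
Proof. by rewrite mxE !eqxx. Qed.

Lemma Df (F : finFieldType) n (D : 'M[F]_n.+1) :
  blk D -> D *m fmx F n = fmx F n *m D.
Proof.
move=> hd; apply/matrixP => i j; rewrite !mxE.
rewrite (sum_at (G := fun k => D i k * fmx F n k j)) => [|k k0]; last by rewrite !mxE (negbTE k0) mulr0.
rewrite (sum_at (G := fun k => fmx F n i k * D k j)) => [|k k0]; last by rewrite !mxE (negbTE k0) andbF mul0r.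
rewrite !mxE !eqxx !andbT.
case: (eqVneq i ord_max) => [ei|ni]; case: (eqVneq j ord_max) => [ej|nj].
- by subst; rewrite mulr1 mul1r.
- by subst; rewrite mulr0 mul1r hd // eqxx eq_sym (negbTE nj).
- by subst; rewrite mulr1 mul0r hd // (negbTE ni) eqxx.
- by rewrite mulr0 mul0r.
Qed.


Lemma RP (F : finFieldType) n K1 K2 (M : 'M[F]_n.+1) :
  reflect [/\ forall i j : 'I_n, M (wid i) (wid j) \in K1,
              forall j : 'I_n, M ord_max (wid j) = 0 &
              M ord_max ord_max \in K2] (M \in Aring F n K1 K2).
Proof.
rewrite inE; apply: (iffP and3P) => [[/forallP h1 /forallP h2 h3] | [h1 h2 h3]].
  by split=> // [i j|j]; [exact: (forallP (h1 i) j) | exact/eqP].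
split=> //; apply/forallP => i; [apply/forallP => j; exact: h1 | exact/eqP].
Qed.

Lemma notmax n (j : 'I_n.+1) : j != ord_max -> exists j' : 'I_n, j = wid j'.
Proof.
move=> hj; have lt : (j < n)%N.
  by rewrite ltn_neqAle -ltnS ltn_ord andbT; apply: contra hj => /eqP e; apply/eqP/val_inj.
by exists (Ordinal lt); apply/val_inj.
Qed.

Lemma R_blk (F : finFieldType) n K1 K2 (M : 'M[F]_n.+1) :
  M \in Aring F n K1 K2 -> blk (M - jpart M).
Proof.
case/RP=> _ h2 _ i j; rewrite !mxE.
case: (eqVneq i ord_max) => [ei|ni]; case: (eqVneq j ord_max) => [ej|nj] //= _.
- by subst; have [j' ->] := notmax nj; rewrite h2 subr0.
- by subst; rewrite subrr.
Qed.

Lemma J_R (F : finFieldType) n K1 K2 (U : 'M[F]_n.+1) : Kok K1 -> Kok K2 ->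
  U \in Jrad F n -> U \in Aring F n K1 K2.
Proof.
move=> [a1 _ _ _] [a2 _ _ _] /JP h; apply/RP; split.
- by move=> i j; rewrite h //; apply/negP => /andP[_ /eqP/(congr1 val)] /= e;
    move: (ltn_ord j); rewrite e ltnn.
- by move=> j; rewrite h // eqxx.
- by rewrite h // eqxx.
Qed.

Lemma R_sub (F : finFieldType) n K1 K2 (M N : 'M[F]_n.+1) : Kok K1 -> Kok K2 ->
  M \in Aring F n K1 K2 -> N \in Aring F n K1 K2 -> M - N \in Aring F n K1 K2.
Proof.
move=> [_ _ s1 _] [_ _ s2 _] /RP[a1 a2 a3] /RP[b1 b2 b3]; apply/RP; split.
- by move=> i j; rewrite !mxE s1.
- by move=> j; rewrite !mxE a2 b2 subr0.
- by rewrite !mxE s2.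
Qed.


Lemma R_1 (F : finFieldType) n K1 K2 : Kok K1 -> Kok K2 ->
  (1 : 'M[F]_n.+1) \in Aring F n K1 K2.
Proof.
move=> [a0 a1 _ _] [_ b1 _ _]; apply/RP; split.
- by move=> i j; rewrite !mxE; case: (wid i == wid j).
- move=> j; rewrite !mxE; case: (eqVneq ord_max (wid j)) => // /(congr1 val) /= e.
  by move: (ltn_ord j); rewrite -e ltnn.
- by rewrite !mxE eqxx.
Qed.

Lemma R_f (F : finFieldType) n K1 K2 : Kok K1 -> Kok K2 ->
  fmx F n \in Aring F n K1 K2.
Proof.
move=> [a0 a1 _ _] [_ b1 _ _]; apply/RP; split.
- by move=> i j; rewrite !mxE; case: (wid i == ord_max); case: (wid j == ord_max).
- move=> j; rewrite !mxE; case: (eqVneq (wid j) ord_max) => [/(congr1 val) /= e|]; last by rewrite andbF.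
  by move: (ltn_ord j); rewrite e ltnn.
- by rewrite !mxE !eqxx.
Qed.
Lemma R_mul (F : finFieldType) n K1 K2 (M N : 'M[F]_n.+1) : Kok K1 -> Kok K2 ->
  M \in Aring F n K1 K2 -> N \in Aring F n K1 K2 -> M *m N \in Aring F n K1 K2.
Proof.
move=> k1 k2 /RP[a1 a2 a3] /RP[b1 b2 b3]; apply/RP; split.
- move=> i j; rewrite !mxE big_ord_recr /= b2 mulr0 addr0.
  apply: (big_ind (fun x => is_true (x \in K1))).
  + by case: k1.
  + exact: Kok_add.
  + by move=> k _; case: k1 => _ _ _ m; apply: m; [apply: a1 | apply: b1].
- move=> j; rewrite !mxE big1 // => k _.
  case: (eqVneq k ord_max) => [ek|nk]; first by subst; rewrite b2 mulr0.
  by have [k' ->] := notmax nk; rewrite a2 mul0r.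
- rewrite !mxE (sum_at (G := fun k => M ord_max k * N k ord_max)).
    by case: k2 => _ _ _ m; apply: m.
  by move=> k nk; have [k' ->] := notmax nk; rewrite a2 mul0r.
Qed.


Definition dpart (F : finFieldType) n (M : 'M[F]_n.+1) : 'M[F]_n.+1 :=
  \matrix_(i, j) if (i != ord_max) && (j == ord_max) then 0 else M i j.

Lemma dj (F : finFieldType) n (M : 'M[F]_n.+1) : M = dpart M + jpart M.
Proof. by apply/matrixP => i j; rewrite !mxE; case: ifP; rewrite ?addr0 ?add0r. Qed.

Lemma dpartB (F : finFieldType) n (M N : 'M[F]_n.+1) : dpart (M - N) = dpart M - dpart N.
Proof. by apply/matrixP => i j; rewrite !mxE; case: ifP; rewrite ?subr0. Qed.

Lemma dpartJ (F : finFieldType) n (M : 'M[F]_n.+1) : M \in Jrad F n -> dpart M = 0.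
Proof.
move/JP=> h; apply/matrixP => i j; rewrite !mxE; case: ifP => // /negbT /h ->.
by [] || rewrite mxE.
Qed.

Lemma dpart_blk (F : finFieldType) n (D : 'M[F]_n.+1) : blk D -> dpart D = D.
Proof.
move=> h; apply/matrixP => i j; rewrite !mxE; case: ifP => // /andP[a b].
by rewrite h // (negbTE a) b.
Qed.

Lemma blk_dpart (F : finFieldType) n K1 K2 (M : 'M[F]_n.+1) :
  M \in Aring F n K1 K2 -> blk (dpart M).
Proof.
move=> /R_blk h; suff -> : dpart M = M - jpart M by [].
by apply/matrixP => i j; rewrite !mxE; case: ifP; rewrite ?subr0 ?subrr.
Qed.

Lemma decomp (F : finFieldType) n (D U : 'M[F]_n.+1) : blk D -> U \in Jrad F n ->
  dpart (D + U) = D /\ jpart (D + U) = U.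
Proof.
move=> hD hU; split; last by rewrite jpartD jpart_blk // jpartJ // add0r.
move/JP: hU => hU; apply/matrixP => i j; rewrite !mxE; case: ifP => [/andP[a b]|/negbT c].
  by rewrite hD // (negbTE a) b.
by rewrite (hU i j c) addr0.
Qed.

Lemma JN (F : finFieldType) n (U : 'M[F]_n.+1) : U \in Jrad F n -> - U \in Jrad F n.
Proof. by move=> h; rewrite -sub0r JB // J0. Qed.

Lemma R_add (F : finFieldType) n K1 K2 (M N : 'M[F]_n.+1) : Kok K1 -> Kok K2 ->
  M \in Aring F n K1 K2 -> N \in Aring F n K1 K2 -> M + N \in Aring F n K1 K2.
Proof.
move=> k1 k2 hM hN.
have hN' : - N \in Aring F n K1 K2.
  by rewrite -sub0r; apply: R_sub => //; apply: J_R => //; apply: J0.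
by rewrite -[N]opprK; apply: R_sub.
Qed.

Definition TU (F : finFieldType) n (K1 K2 : {pred F}) (U : 'M[F]_n.+1) : {set 'M[F]_n.+1} :=
  [set M in Aring F n K1 K2 | jpart M == U * dpart M - dpart M * U].

Lemma phiJ (F : finFieldType) n (D U : 'M[F]_n.+1) : blk D -> U \in Jrad F n ->
  U * D - D * U \in Jrad F n.
Proof.
move=> hD hU; apply: JB; last exact: DJ.
by rewrite (JD_r hU hD : U * D = _) JZ.
Qed.


Lemma TUP (F : finFieldType) n (K1 K2 : {pred F}) (U M : 'M[F]_n.+1) :
  reflect (M \in Aring F n K1 K2 /\ jpart M = U * dpart M - dpart M * U)
          (M \in TU K1 K2 U).
Proof.
have -> : (M \in TU K1 K2 U) = (M \in Aring F n K1 K2) && (jpart M == U * dpart M - dpart M * U).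
  by rewrite /TU in_set.
by apply: (iffP andP) => [[a /eqP b]|[a b]]; split => //; apply/eqP.
Qed.

Lemma TU_compl (F : finFieldType) n (K1 K2 : {pred F}) (U : 'M[F]_n.+1) :
  Kok K1 -> Kok K2 -> U \in Jrad F n ->
  is_ss_complement (Aring F n K1 K2) (Jrad F n) (TU K1 K2 U).
Proof.
move=> k1 k2 hU; apply/and5P; split.
- by apply/subsetP => M /TUP[].
- apply/TUP; split; first exact: R_1.
  by rewrite (jpart_blk (@blk1 F n)) (dpart_blk (@blk1 F n)) mulr1 mul1r subrr.
- apply/forallP => x; apply/implyP => /TUP[xR ex].
  apply/forallP => y; apply/implyP => /TUP[yR ey].
  apply/andP; split; apply/TUP.
    split; first exact: R_sub.
    rewrite jpartB dpartB ex ey mulrBr mulrBl.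
    by apply/matrixP => i j; rewrite !mxE; ring.
  split; first exact: R_mul.
  have bx := blk_dpart xR; have by_ := blk_dpart yR.
  have jx : jpart x \in Jrad F n by apply: jpart_in.
  have jy : jpart y \in Jrad F n by apply: jpart_in.
  have e : x * y = dpart x * dpart y + (dpart x * jpart y + jpart x * dpart y).
    rewrite {1}(dj x) {1}(dj y) mulrDl !mulrDr (JJ jx jy : jpart x * jpart y = 0).
    by rewrite addr0 addrA.
  have hj : dpart x * jpart y + jpart x * dpart y \in Jrad F n.
    by apply: JD; [apply: DJ | rewrite (JD_r jx by_ : _ * _ = _) JZ].
  have [-> ->] : dpart (x * y) = dpart x * dpart y /\
     jpart (x * y) = dpart x * jpart y + jpart x * dpart y.
    by rewrite e; exact: (decomp (blkM bx by_) hj).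
  rewrite ex ey mulrBr mulrBl !mulrA [LHS]addrC addrA subrK.
  by rewrite -!mulrA.
- apply/eqP/setP => M; rewrite in_setI in_set1.
  apply/idP/idP => [/andP[/TUP[_ e] hJ] | /eqP ->].
    by rewrite (dj M) e (dpartJ hJ) mulr0 mul0r subrr addr0.
  apply/andP; split; last exact: J0.
  apply/TUP; split; first by apply: J_R => //; apply: J0.
  by rewrite jpartJ ?J0 // dpartJ ?J0 // mulr0 mul0r subrr.
- apply/forallP => r; apply/implyP => rR.
  have bD := blk_dpart rR.
  have hp := phiJ bD hU.
  apply/existsP; exists (dpart r + (U * dpart r - dpart r * U)).
  apply/andP; split.
    apply/TUP; have [-> ->] := decomp bD hp; split => //.
    apply: R_add => //; last exact: J_R.
    have -> : dpart r = r - jpart r by rewrite {2}(dj r) addrK.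
    by apply: R_sub => //; apply: J_R => //; apply: jpart_in.
  rewrite {1}(dj r) opprD addrACA subrr add0r.
  by apply: JB => //; apply: jpart_in.
Qed.


Lemma zid (V : zmodType) (a b c d : V) : a + b + c - (a + d) = b + c - d.
Proof.
rewrite [a + b]addrC -!addrA; congr (_ + _).
by rewrite opprD addrCA addNKr.
Qed.

Lemma fU (F : finFieldType) n (U : 'M[F]_n.+1) : U \in Jrad F n -> U * fmx F n = U.
Proof. by move=> hU; rewrite (JD_r hU (@blkf F n) : _ * _ = _) f_mm scale1r. Qed.

Lemma compl_TU (F : finFieldType) n (K1 K2 : {pred F}) (T : {set 'M[F]_n.+1}) :
  Kok K1 -> Kok K2 -> is_ss_complement (Aring F n K1 K2) (Jrad F n) T ->
  exists2 U, U \in Jrad F n & T = TU K1 K2 U.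
Proof.
move=> k1 k2 /and5P[/subsetP TR T1 /forallP Tcl /eqP TJ /forallP Tdec].
have Tsub x y : x \in T -> y \in T -> x - y \in T.
  by move=> hx hy; have /andP[] := implyP (forallP (implyP (Tcl x) hx) y) hy.
have Tmul x y : x \in T -> y \in T -> x * y \in T.
  by move=> hx hy; have /andP[] := implyP (forallP (implyP (Tcl x) hx) y) hy.
have TJ0 x : x \in T -> x \in Jrad F n -> x = 0.
  move=> hx hJ; have : x \in T :&: Jrad F n by rewrite in_setI hx hJ.
  by rewrite TJ in_set1 => /eqP.
have fR : fmx F n \in Aring F n K1 K2 by apply: R_f.
have /existsP[t /andP[tT ft]] := implyP (Tdec (fmx F n)) fR.
set U := t - fmx F n.
have hU : U \in Jrad F n by rewrite /U -opprB; apply: JN.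
have et : t = fmx F n + U by rewrite /U addrC subrK.
clearbody U.
have sub1 : {subset T <= TU K1 K2 U}.
  move=> M hM; have MR := TR M hM; apply/TUP; split => //.
  have bD := blk_dpart MR; have jJ : jpart M \in Jrad F n by apply: jpart_in.
  set D := dpart M; set j := jpart M.
  have eM : M = D + j by apply: dj.
  have XT : M * t - t * M \in T by apply: Tsub; apply: Tmul.
  have eX : M * t - t * M = D * U + j - U * D.
    have DfE : D * fmx F n = fmx F n * D := Df bD.
    rewrite eM et !mulrDl !mulrDr (fU jJ) (JJ jJ hU : j * U = 0).
    rewrite (fJ jJ : _ * _ = 0) (JJ hU jJ : U * j = 0) DfE.
    by rewrite !addr0 zid.
  have XJ : M * t - t * M \in Jrad F n.
    rewrite eX; apply: JB; first by apply: JD => //; apply: DJ.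
    by rewrite (JD_r hU bD : _ * _ = _) JZ.
  have := TJ0 _ XT XJ; rewrite eX => /eqP; rewrite subr_eq0 => /eqP e.
  by rewrite -e [D * U + j]addrC addrK.
exists U => //; apply/setP => M; apply/idP/idP; first exact: sub1.
move=> /TUP[MR eM].
have /existsP[t' /andP[tT' Mt]] := implyP (Tdec M) MR.
have /TUP[_ et'] := sub1 _ tT'.
have ed : dpart M = dpart t'.
  by apply/eqP; rewrite -subr_eq0 -dpartB dpartJ.
suff -> : M = t' by [].
by rewrite (dj M) (dj t') eM et' ed.
Qed.

Lemma TU_inj (F : finFieldType) n (K1 K2 : {pred F}) : Kok K1 -> Kok K2 ->
  {in Jrad F n &, injective (TU K1 K2)}.
Proof.
move=> k1 k2 U V hU hV e.
have hf : fmx F n + U \in TU K1 K2 U.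
  apply/TUP; split; first by apply: R_add => //; [apply: R_f | apply: J_R].
  have [-> ->] := decomp (@blkf F n) hU.
  by rewrite fU // (fJ hU : _ * _ = 0) subr0.
move: hf; rewrite e => /TUP[_].
have [-> ->] := decomp (@blkf F n) hU.
by rewrite fU // (fJ hV : _ * _ = 0) subr0.
Qed.


Theorem lemma3p1 (p d1 d2 n : nat) (F : finFieldType) :
  prime p -> (0 < d1)%N -> (0 < d2)%N -> (0 < n)%N ->
  #|F| = (p ^ lcmn d1 d2)%N ->
  let R := Aring F n (subfieldOf (F:=F) (p ^ d1)) (subfieldOf (F:=F) (p ^ d2)) in
  let J := Jrad F n in
  J :&: center_of R = [set 0] /\ #|ss_complements R J| = #|J|.
Proof.
move=> pp d10 d20 n0 cardF R J.
have pc : p \in [pchar F] by apply: (card_finPcharP cardF pp).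
have k1 := subfield_ok pc d10; have k2 := subfield_ok pc d20.
rewrite {}/R {}/J.
set K1 := subfieldOf (p ^ d1); set K2 := subfieldOf (p ^ d2).
split.
- apply/setP => M; rewrite in_setI in_set1.
  have -> : (M \in center_of (Aring F n K1 K2)) =
     (M \in Aring F n K1 K2) && [forall y in Aring F n K1 K2, M * y == y * M].
    by rewrite /center_of in_set.
  case: (eqVneq M 0) => [-> | nz].
    rewrite J0 /=; apply/andP; split; first by apply: J_R => //; apply: J0.
    by apply/forallP => y; apply/implyP => _; rewrite mul0r mulr0.
  apply/negbTE/negP => /andP[hJ /andP[_ /forallP h]].
  have := implyP (h (fmx F n)) (@R_f F n K1 K2 k1 k2).
  rewrite (fU hJ) (fJ hJ : _ * _ = 0) => /eqP e.
  by rewrite e eqxx in nz.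
- rewrite (_ : ss_complements _ _ = TU K1 K2 @: Jrad F n).
    by apply: card_in_imset; apply: TU_inj.
  apply/setP => T; rewrite /ss_complements in_set.
  apply/idP/imsetP => [h | [U hU ->]]; last exact: TU_compl.
  by have [U hU eT] := compl_TU k1 k2 h; exists U.
Qed.
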